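(* Let $X$ be a gamble, $I=[\inf X,\sup X]$, $\phi:I\to\mathbb{R}$ convex and $\psi:I\to\mathbb{R}$ concave. Let $\underline{P}$ be a 2-coherent lower prevision defined on a set of gambles containing $X$ and the other gambles involved (e.g. on all gambles), with conjugate $\overline{P}$. Define $x_L=l(\underline{P}(X))$, $x_U=u(\underline{P}(X))$, $z_L=l(\overline{P}(X))$, $z_U=u(\overline{P}(X))$. (a1) If $\inf X\le x_L<x_U\le\sup X$, then $$\underline{P}(\psi(X))\le\psi(x_U)\frac{\underline{P}(X)-x_L}{x_U-x_L}+\psi(x_L)\Big(1-\frac{\underline{P}(X)-x_L}{x_U-x_L}\Big)\le\psi(\underline{P}(X)).$$ (a2) If $\inf X\le z_L<z_U\le\sup X$ and $\psi(z_L)\le\psi(z_U)$, then $$\overline{P}(\psi(X))\le\psi(z_U)\frac{\overline{P}(X)-z_L}{z_U-z_L}+\psi(z_L)\Big(1-\frac{\overline{P}(X)-z_L}{z_U-z_L}\Big)\le\psi(\overline{P}(X)).$$ (b1) If $\inf X\le z_L<z_U\le\sup X$, then $$\overline{P}(\phi(X))\ge\phi(z_U)\frac{\overline{P}(X)-z_L}{z_U-z_L}+\phi(z_L)\Big(1-\frac{\overline{P}(X)-z_L}{z_U-z_L}\Big)\ge\phi(\overline{P}(X)).$$ (b2) If $\inf X\le x_L<x_U\le\sup X$ and $\phi(x_L)\le\phi(x_U)$, then $$\underline{P}(\phi(X))\ge\phi(x_U)\frac{\underline{P}(X)-x_L}{x_U-x_L}+\phi(x_L)\Big(1-\frac{\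underline{P}(X)-x_L}{x_U-x_L}\Big)\ge\phi(\underline{P}(X)).$$
   Context: $\Pi$ is a partition of the sure event into pairwise disjoint non-impossible events; a gamble is a bounded map $X:\Pi\to\mathbb{R}$ with image set $Im(X)=\{X(\omega):\omega\in\Pi\}$; $f(X)$ denotes $\omega\mapsto f(X(\omega))$. For $k\in[\inf X,\sup X]$, $l(k)=\sup\{x\in Im(X):x\le k\}$ and $u(k)=\inf\{x\in Im(X):x\ge k\}$. A lower prevision $\underline{P}:\mathcal{D}\to\mathbb{R}$ is 2-coherent iff for all $X_0,X_1\in\mathcal{D}$, $s_1\ge 0$, $s_0\in\mathbb{R}$, $\sup[s_1(X_1-\underline{P}(X_1))-s_0(X_0-\underline{P}(X_0))]\ge 0$; its conjugate is $\overline{P}(Y)=-\underline{P}(-Y)$. *)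

(* Defs.v *)
From HB Require Import structures.
From mathcomp Require Import all_boot all_order all_algebra.
From mathcomp Require Import all_classical all_reals.
Set Implicit Arguments. Unset Strict Implicit. Unset Printing Implicit Defensive.
Import Order.TTheory GRing.Theory Num.Theory.
Local Open Scope classical_set_scope.
Local Open Scope ring_scope.

Definition gamble (R : realType) (Omega : Type) (X : Omega -> R) : Prop :=
  exists M : R, forall w, `|X w| <= M.

Definition gsup (R : realType) (Omega : Type) (X : Omega -> R) : R := sup (range X).
Definition ginf (R : realType) (Omega : Type) (X : Omega -> R) : R := inf (range X).

Definition lpt (R : realType) (Omega : Type) (X : Omega -> R) (k : R) : R :=
  sup [set x | range X x /\ x <= k].
Definition upt (R : realType) (Omega : Type) (X : Omega -> R) (k : R) : R :=
  inf [set x | range X x /\ k <= x].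

Definition two_coherent (R : realType) (Omega : Type)
    (D : set (Omega -> R)) (P : (Omega -> R) -> R) : Prop :=
  forall X0 X1, D X0 -> D X1 -> forall s1 s0 : R, 0 <= s1 ->
    0 <= sup (range (fun w => s1 * (X1 w - P X1) - s0 * (X0 w - P X0))).

Definition upper (R : realType) (Omega : Type) (P : (Omega -> R) -> R)
    (Y : Omega -> R) : R := - P (fun w => - Y w).

Definition convex_on (R : realType) (I : set R) (f : R -> R) : Prop :=
  forall x y t, I x -> I y -> 0 <= t -> t <= 1 ->
    f (t * x + (1 - t) * y) <= t * f x + (1 - t) * f y.
Definition concave_on (R : realType) (I : set R) (f : R -> R) : Prop :=
  forall x y t, I x -> I y -> 0 <= t -> t <= 1 ->
    t * f x + (1 - t) * f y <= f (t * x + (1 - t) * y).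

(* Main.v *)
Require Import Defs.
From HB Require Import structures.
From mathcomp Require Import all_boot all_order all_algebra.
From mathcomp Require Import all_classical all_reals.
Import Order.TTheory GRing.Theory Num.Theory.
Local Open Scope classical_set_scope.
Local Open Scope ring_scope.
From mathcomp Require Import ring lra.
Set Implicit Arguments.
Lemma alg1 (R : realType) (fx fa fb s t a b x : R) :
  0 < t -> t*fx + (1-t)*fb <= fa -> fb = fa + s*(b-a) -> t*(b-x) = b-a ->
  fx <= fa + s*(x-a).
Proof.
move=> t0 H1 H2 H3.
have E : (1-t)*(b-a) = t*(a-x).
  have -> : (1-t)*(b-a) = (b-a) - t*(b-a) by ring.
  rewrite -{1}H3; ring.
rewrite -(ler_pM2l t0).
have : t*fx <= t*fa - s*((1-t)*(b-a)).
  rewrite H2 in H1. move: H1. set u := (1-t)*(b-a).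
  have -> : (1-t)*(fa+s*(b-a)) = (1-t)*fa + s*u by rewrite /u; ring.
  move=> H1. lra.
rewrite E => H. lra.
Qed.

Lemma alg2 (R : realType) (fx fa fb s t a b x : R) :
  0 < t -> t*fx + (1-t)*fa <= fb -> fb = fa + s*(b-a) -> t*(x-a) = b-a ->
  fx <= fa + s*(x-a).
Proof.
move=> t0 H1 H2 H3.
rewrite -(ler_pM2l t0).
have -> : t * (fa + s*(x-a)) = t*fa + s*(t*(x-a)) by ring.
rewrite H3. lra.
Qed.

Lemma chord_cc (R : realType) (I : set R) (f : R -> R) a b x :
  concave_on I f -> I a -> I b -> I x -> a < b -> (x <= a \/ b <= x) ->
  f x <= f a + (f b - f a)/(b-a)*(x-a).
Proof.
move=> hc Ia Ib Ix ab [xa|bx].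
- have bx0 : 0 < b - x by lra.
  have ba0 : 0 < b - a by lra.
  set t := (b-a)/(b-x).
  have t0 : 0 < t by rewrite /t divr_gt0.
  have t1 : t <= 1 by rewrite /t ler_pdivrMr // mul1r; lra.
  have := hc x b t Ix Ib (ltW t0) t1.
  have -> : t*x + (1-t)*b = a.
    rewrite /t; field; by rewrite ?(gt_eqF bx0) ?(gt_eqF ba0).
  move=> H; apply: (@alg1 _ _ _ _ _ _ a b x t0 H).
    by rewrite divfK ?(gt_eqF ba0) // addrC subrK.
  by rewrite /t divfK ?(gt_eqF bx0).
- have bx0 : 0 < x - a by lra.
  have ba0 : 0 < b - a by lra.
  set t := (b-a)/(x-a).
  have t0 : 0 < t by rewrite /t divr_gt0.
  have t1 : t <= 1 by rewrite /t ler_pdivrMr // mul1r; lra.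
  have := hc x a t Ix Ia (ltW t0) t1.
  have -> : t*x + (1-t)*a = b.
    rewrite /t; field; by rewrite ?(gt_eqF bx0) ?(gt_eqF ba0).
  move=> H; apply: (@alg2 _ _ _ _ _ _ a b x t0 H).
    by rewrite divfK ?(gt_eqF ba0) // addrC subrK.
  by rewrite /t divfK ?(gt_eqF bx0).
Qed.

Lemma chord_cv (R : realType) (I : set R) (f : R -> R) a b x :
  convex_on I f -> I a -> I b -> I x -> a < b -> (x <= a \/ b <= x) ->
  f a + (f b - f a)/(b-a)*(x-a) <= f x.
Proof.
move=> hc Ia Ib Ix ab hx.
have hc' : concave_on I (fun y => - f y).
  move=> y z t Iy Iz t0 t1; have := hc y z t Iy Iz t0 t1; lra.
have := @chord_cc _ _ _ a b x hc' Ia Ib Ix ab hx.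
have -> : (- f b - - f a) / (b - a) * (x - a) = - ((f b - f a) / (b - a) * (x - a)).
  have -> : - f b - - f a = - (f b - f a) by ring. by rewrite !mulNr.
lra.
Qed.

Lemma range_I (R : realType) (Omega : Type) (X : Omega -> R) w :
  gamble X -> ginf X <= X w <= gsup X.
Proof.
move=> [M hM]; apply/andP; split.
- apply: ge_inf; last by exists w.
  exists (-M) => y [v _ <-]; by move: (hM v); rewrite ler_norml => /andP[].
- apply: ub_le_sup; last by exists w.
  exists M => y [v _ <-]; by move: (hM v); rewrite ler_norml => /andP[].
Qed.

Lemma lu_props (R : realType) (Omega : Type) (X : Omega -> R) k :
  gamble X -> ginf X <= lpt X k -> lpt X k < upt X k -> upt X k <= gsup X ->
  lpt X k <= k /\ k <= upt X k /\ forall w, X w <= lpt X k \/ upt X k <= X w.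
Proof.
move=> hb h1 h2 h3.
rewrite /lpt /upt in h1 h2 h3 *.
set A := [set x | range X x /\ x <= k] in h1 h2 h3 *.
set B := [set x | range X x /\ k <= x] in h1 h2 h3 *.
have An : A !=set0.
  apply/not_existsP => hn.
  have A0 : A = set0 by apply/seteqP; split => x // Ax; exact: (hn x).
  have BR : B = range X.
    apply/seteqP; split => x; first by case.
    move=> Rx; split => //; case: (lerP x k) => xk; [exfalso; exact: (hn x (conj Rx xk)) | exact: ltW].
  rewrite A0 sup0 BR in h1 h2; rewrite /ginf in h1; lra.
have Bn : B !=set0.
  apply/not_existsP => hn.
  have B0 : B = set0 by apply/seteqP; split => x // Ax; exact: (hn x).
  have AR : A = range X.
    apply/seteqP; split => x; first by case.
    move=> Rx; split => //; case: (lerP k x) => xk; [exfalso; exact: (hn x (conj Rx xk)) | exact: ltW].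
  rewrite B0 inf0 AR in h2 h3; rewrite /gsup in h3; lra.
split; first by apply: ge_sup => // x [].
split; first by apply: lb_le_inf => // x [].
move=> w; case: (lerP (X w) k) => hw.
- left; apply: ub_le_sup; last by split => //; exists w.
  by exists k => x [].
- right; apply: ge_inf; last by split; [by exists w | exact: ltW].
  by exists k => x [].
Qed.

Lemma twoc_lin (R : realType) (Omega : Type) (Omega_ne : inhabited Omega)
  (D : set (Omega -> R)) (P : (Omega -> R) -> R) X0 X1 s1 s0 c :
  two_coherent D P -> D X0 -> D X1 -> 0 <= s1 ->
  (forall w, s1 * X1 w - s0 * X0 w <= c) -> 0 <= c - s1 * P X1 + s0 * P X0.
Proof.
move=> hcoh h0 h1 hs hc.
apply: le_trans (hcoh X0 X1 h0 h1 s1 s0 hs) _.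
apply: ge_sup.
  by case: Omega_ne => w; eexists; exists w.
move=> y [w _ <-]; have := hc w; lra.
Qed.
Unset Implicit Arguments.
Theorem theorem5 (R : realType) (Omega : Type) (Omega_ne : inhabited Omega)
  (D : set (Omega -> R)) (P : (Omega -> R) -> R)
  (X : Omega -> R) (phi psi : R -> R)
  (hD : forall Y, D Y -> gamble Y)
  (hcoh : two_coherent D P)
  (hX : D X) (hNX : D (fun w => - X w))
  (hpsi : D (fun w => psi (X w))) (hNpsi : D (fun w => - psi (X w)))
  (hphi : D (fun w => phi (X w))) (hNphi : D (fun w => - phi (X w)))
  (hphic : convex_on [set x | ginf X <= x <= gsup X] phi)
  (hpsic : concave_on [set x | ginf X <= x <= gsup X] psi) :
  let xL := lpt X (P X) in let xU := upt X (P X) in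
  let zL := lpt X (upper P X) in let zU := upt X (upper P X) in
  let a := (P X - xL) / (xU - xL) in
  let b := (upper P X - zL) / (zU - zL) in
  (* (a1) *)
  (ginf X <= xL -> xL < xU -> xU <= gsup X ->
     P (fun w => psi (X w)) <= psi xU * a + psi xL * (1 - a) /\
     psi xU * a + psi xL * (1 - a) <= psi (P X)) /\
  (* (a2) *)
  (ginf X <= zL -> zL < zU -> zU <= gsup X -> psi zL <= psi zU ->
     upper P (fun w => psi (X w)) <= psi zU * b + psi zL * (1 - b) /\
     psi zU * b + psi zL * (1 - b) <= psi (upper P X)) /\
  (* (b1) *)
  (ginf X <= zL -> zL < zU -> zU <= gsup X ->
     phi zU * b + phi zL * (1 - b) <= upper P (fun w => phi (X w)) /\
     phi (upper P X) <= phi zU * b + phi zL * (1 - b)) /\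
  (* (b2) *)
  (ginf X <= xL -> xL < xU -> xU <= gsup X -> phi xL <= phi xU ->
     phi xU * a + phi xL * (1 - a) <= P (fun w => phi (X w)) /\
     phi (P X) <= phi xU * a + phi xL * (1 - a)).
Proof.
move=> xL xU zL zU a b.
have hXb := hD X hX.
set I := [set x | ginf X <= x <= gsup X] in hphic hpsic.
have IX : forall w, I (X w) by move=> w; exact: range_I.
have uX : upper P X = - P (fun w => - X w) by [].
have uF : forall f : R -> R, upper P (fun w => f (X w)) = - P (fun w => - f (X w)) by [].
split; [|split; [|split]].
- move=> h1 h2 h3.
  have [hlk [hku hw]] := @lu_props _ _ X _ hXb h1 h2 h3.
  have IL : I xL by rewrite /I /=; apply/andP; split; lra.
  have IU : I xU by rewrite /I /=; apply/andP; split; lra.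
  have d0 : 0 < xU - xL by lra.
  set al := (psi xU - psi xL)/(xU - xL).
  have hlin : forall w, 1 * psi (X w) - al * X w <= psi xL - al * xL.
    move=> w; have := @chord_cc _ I psi xL xU (X w) hpsic IL IU (IX w) h2 (hw w).
    rewrite -/al; lra.
  have Hc := @twoc_lin _ _ Omega_ne D P X (fun w => psi (X w)) 1 al _ hcoh hX hpsi ler01 hlin.
  have Ea : psi xU * a + psi xL * (1 - a) = psi xL + al * (P X - xL).
    by rewrite /a /al; field; rewrite gt_eqF.
  have a0 : 0 <= a by rewrite /a divr_ge0 // ?subr_ge0 // ltW.
  have a1 : a <= 1 by rewrite /a ler_pdivrMr // mul1r; lra.
  split; first by rewrite Ea; lra.
  have := hpsic xU xL a IU IL a0 a1.
  have -> : a * xU + (1 - a) * xL = P X by rewrite /a; field; rewrite gt_eqF.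
  lra.
- move=> h1 h2 h3 h4.
  have [hlk [hku hw]] := @lu_props _ _ X _ hXb h1 h2 h3.
  have IL : I zL by rewrite /I /=; apply/andP; split; lra.
  have IU : I zU by rewrite /I /=; apply/andP; split; lra.
  have d0 : 0 < zU - zL by lra.
  set al := (psi zU - psi zL)/(zU - zL).
  have hal : 0 <= al by rewrite /al divr_ge0 // ?subr_ge0 // ltW.
  have hlin : forall w, al * (- X w) - 1 * (- psi (X w)) <= psi zL - al * zL.
    move=> w; have := @chord_cc _ I psi zL zU (X w) hpsic IL IU (IX w) h2 (hw w).
    rewrite -/al; lra.
  have Hc := @twoc_lin _ _ Omega_ne D P (fun w => - psi (X w)) (fun w => - X w) al 1 _ hcoh hNpsi hNX hal hlin.
  have Eb : psi zU * b + psi zL * (1 - b) = psi zL + al * (upper P X - zL).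
    by rewrite /b /al; field; rewrite gt_eqF.
  have b0 : 0 <= b by rewrite /b divr_ge0 // ?subr_ge0 // ltW.
  have b1 : b <= 1 by rewrite /b ler_pdivrMr // mul1r; lra.
  split; first by rewrite Eb uF uX; lra.
  have := hpsic zU zL b IU IL b0 b1.
  have -> : b * zU + (1 - b) * zL = upper P X by rewrite /b; field; rewrite gt_eqF.
  lra.
- move=> h1 h2 h3.
  have [hlk [hku hw]] := @lu_props _ _ X _ hXb h1 h2 h3.
  have IL : I zL by rewrite /I /=; apply/andP; split; lra.
  have IU : I zU by rewrite /I /=; apply/andP; split; lra.
  have d0 : 0 < zU - zL by lra.
  set al := (phi zU - phi zL)/(zU - zL).
  have hlin : forall w, 1 * (- phi (X w)) - al * (- X w) <= - (phi zL - al * zL).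
    move=> w; have := @chord_cv _ I phi zL zU (X w) hphic IL IU (IX w) h2 (hw w).
    rewrite -/al; lra.
  have Hc := @twoc_lin _ _ Omega_ne D P (fun w => - X w) (fun w => - phi (X w)) 1 al _ hcoh hNX hNphi ler01 hlin.
  have Eb : phi zU * b + phi zL * (1 - b) = phi zL + al * (upper P X - zL).
    by rewrite /b /al; field; rewrite gt_eqF.
  have b0 : 0 <= b by rewrite /b divr_ge0 // ?subr_ge0 // ltW.
  have b1 : b <= 1 by rewrite /b ler_pdivrMr // mul1r; lra.
  split; first by rewrite Eb uF uX; lra.
  have := hphic zU zL b IU IL b0 b1.
  have -> : b * zU + (1 - b) * zL = upper P X by rewrite /b; field; rewrite gt_eqF.
  lra.
- move=> h1 h2 h3 h4.
  have [hlk [hku hw]] := @lu_props _ _ X _ hXb h1 h2 h3.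
  have IL : I xL by rewrite /I /=; apply/andP; split; lra.
  have IU : I xU by rewrite /I /=; apply/andP; split; lra.
  have d0 : 0 < xU - xL by lra.
  set al := (phi xU - phi xL)/(xU - xL).
  have hal : 0 <= al by rewrite /al divr_ge0 // ?subr_ge0 // ltW.
  have hlin : forall w, al * X w - 1 * phi (X w) <= - (phi xL - al * xL).
    move=> w; have := @chord_cv _ I phi xL xU (X w) hphic IL IU (IX w) h2 (hw w).
    rewrite -/al; lra.
  have Hc := @twoc_lin _ _ Omega_ne D P (fun w => phi (X w)) X al 1 _ hcoh hphi hX hal hlin.
  have Ea : phi xU * a + phi xL * (1 - a) = phi xL + al * (P X - xL).
    by rewrite /a /al; field; rewrite gt_eqF.
  have a0 : 0 <= a by rewrite /a divr_ge0 // ?subr_ge0 // ltW.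
  have a1 : a <= 1 by rewrite /a ler_pdivrMr // mul1r; lra.
  split; first by rewrite Ea; lra.
  have := hphic xU xL a IU IL a0 a1.
  have -> : a * xU + (1 - a) * xL = P X by rewrite /a; field; rewrite gt_eqF.
  lra.
Qed.
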